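(* Let $\Gamma$ be a coloring and $\Omega$ a $k$-ordering of $T_{d,k}$. For every $d$-cell $\tau$ and every cell $\rho\subseteq\tau$, the set $L_{\rho,\tau}=\{g\in G_{d,k}: \rho\subseteq g.\tau\}$ equals the subgroup $K_{[\![d]\!]\setminus\Gamma(\rho)}$. In particular, it depends only on the color of $\rho$.
   Context: Fix $d,k\ge1$, $[\![d]\!]=\{0,\dots,d\}$. $G_{d,k}=\langle\alpha_0,\dots,\alpha_d\mid\alpha_i^k=e\rangle$; for $J\subseteq[\![d]\!]$, $K_J=\langle\alpha_j:j\in J\rangle$ ($K_\emptyset=\{e\}$). The arboreal complex $T_{d,k}$: start from a single $d$-simplex $\mathcal T$, attach to each of its $(d-1)$-faces $k-1$ new $d$-simplices each using a new vertex, and inductively attach to each $(d-1)$-face created in the previous step $k-1$ new $d$-simplices each using a new vertex; $T_{d,k}$ is the union. A coloring $\Gamma$ is a map from vertices to $[\![d]\!]$ injective on each $d$-cell, extended to cells by $\Gamma(\sigma)=\{\Gamma(v):v\in\sigma\}$. A $k$-ordering $\Omega$ assigns to each $(d-1)$-cell $\sigma$ a homomorphism $\Omega_\sigma:\mathbb Z/k\mathbb Z\to\mathrm{Sym}(\delta(\sigma))$ with transitive image, $\delta(\sigma)$ the set of $d$-cells containing $\sigma$. Left action on $d$-cells: $\alpha_i^l.\tau=\Omega_\sigma(l).\tau$ where $\sigma$ is the $(d-1)$-face of $\tau$ of color $[\![d]\!]\setminus\{i\}$, extended to words letter by letter (right-most first); this is a well-defined action of $G_{d,k}$. (Equivalently,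 $L_{\rho,\tau}$ is the set of $g$ for which the cell of $g.\tau$ of color $\Gamma(\rho)$ is $\rho$.) *)

(* Defs.v *)
From HB Require Import structures.
From mathcomp Require Import all_boot.
Set Implicit Arguments. Unset Strict Implicit. Unset Printing Implicit Defensive.

(* A d-cell is encoded by the history of its construction: a sequence of  *)
(* steps (i, j).  Starting from the root simplex (code [::]), whose       *)
(* vertices are Root 0, ..., Root d placed at positions 0..d, the step    *)
(* (i, j) attaches to the current cell, along its (d-1)-face omitting the *)
(* vertex at position i, the j-th (1 <= j <= k-1) of the k-1 new          *)
(* d-simplices; the new simplex has the vertex at position i replaced by  *)
(* a new vertex.  For a non-root cell only the faces created at its own   *)
(* step (those containing its new vertex, i.e. omitting a position other  *)
(* than the last replaced one) get new simplices attached.                *)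

Definition step (d : nat) := ('I_d.+1 * nat)%type.

(* vertices: inl i = i-th vertex of the initial simplex;
             inr q = the new vertex of the d-cell with code q (q <> [::]) *)
Definition vtx (d : nat) := ('I_d.+1 + seq ('I_d.+1 * nat))%type.

Fixpoint valid_from (d k : nat) (prev : option 'I_d.+1)
    (p : seq ('I_d.+1 * nat)) : bool :=
  if p is (i, j) :: p' then
    [&& prev != Some i, 0 < j, j < k & valid_from k (Some i) p']
  else true.

Definition dcell (d k : nat) (p : seq ('I_d.+1 * nat)) : bool :=
  valid_from k None p.

Definition vertex (d : nat) (p : seq ('I_d.+1 * nat)) (i : 'I_d.+1) : vtx d :=
  let t := index i (rev (map fst p)) in
  if t < size p then inr (take (size p - t) p) else inl i.

Definition cverts (d : nat) (p : seq ('I_d.+1 * nat)) : seq (vtx d) :=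
  map (vertex p) (enum 'I_d.+1).

(* cells are finite vertex sets (represented by sequences, read as sets) *)
Definition is_cell (d k : nat) (rho : seq (vtx d)) : Prop :=
  rho != [::] /\ exists p, dcell k p /\ {subset rho <= cverts p}.

Definition facet (d k : nat) (sigma : seq (vtx d)) : Prop :=
  is_cell k sigma /\ size (undup sigma) = d.

Definition in_delta (d k : nat) (sigma : seq (vtx d)) (p : seq ('I_d.+1 * nat))
  : Prop := dcell k p /\ {subset sigma <= cverts p}.

Definition coloring (d k : nat) (Gam : vtx d -> 'I_d.+1) : Prop :=
  forall p, dcell k p -> {in cverts p &, injective Gam}.

(* A k-ordering: to every (d-1)-cell sigma (a set: Omega sigma only depends
   on sigma as a set), a homomorphism Z/kZ -> Sym(delta(sigma)) with
   transitive image.  The homomorphism is given on representatives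
   l : nat of Z/kZ: l |-> Omega sigma l, additive, with 0 and k acting
   trivially (so it factors through Z/kZ and lands in Sym(delta sigma)). *)
Definition k_ordering (d k : nat)
    (Om : seq (vtx d) -> nat -> seq ('I_d.+1 * nat) -> seq ('I_d.+1 * nat))
    : Prop :=
  forall sigma, facet k sigma ->
    [/\ (forall sigma' l p, sigma' =i sigma -> in_delta k sigma p ->
           Om sigma' l p = Om sigma l p),
        (forall p, in_delta k sigma p ->
           [/\ forall l, in_delta k sigma (Om sigma l p),
               Om sigma 0 p = p,
               Om sigma k p = p &
               forall a b, Om sigma (a + b) p = Om sigma a (Om sigma b p)]) &
        (forall p q, in_delta k sigma p -> in_delta k sigma q ->
           exists l, Om sigma l p = q)].

(* The group G_{d,k} = < alpha_0..alpha_d | alpha_i^k = e >.              *)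
(* Elements are represented by words in letters (i, l) standing for       *)
(* alpha_i^l; two words represent the same element iff they are related   *)
(* by weq, the congruence generated by the defining relations.            *)

Definition word (d : nat) := seq ('I_d.+1 * nat).

Inductive weq (d k : nat) : word d -> word d -> Prop :=
| weq_refl w : weq k w w
| weq_sym w1 w2 : weq k w1 w2 -> weq k w2 w1
| weq_trans w1 w2 w3 : weq k w1 w2 -> weq k w2 w3 -> weq k w1 w3
| weq_cat u1 u2 v1 v2 : weq k u1 u2 -> weq k v1 v2 -> weq k (u1 ++ v1) (u2 ++ v2)
| weq_merge (i : 'I_d.+1) a b : weq k [:: (i, a); (i, b)] [:: (i, a + b)]
| weq_zero (i : 'I_d.+1) : weq k [:: (i, 0)] [::]
| weq_pow (i : 'I_d.+1) : weq k [:: (i, k)] [::].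

(* g lies in K_J = < alpha_j : j in J > (inverses are positive powers, so
   the subgroup generated is the set of products of powers of the alpha_j) *)
Definition inK (d k : nat) (J : pred 'I_d.+1) (g : word d) : Prop :=
  exists w : word d, all (fun x => J x.1) w /\ weq k g w.

(* Left action on d-cells: alpha_i^l . tau = Omega_sigma(l) . tau, sigma the
   (d-1)-face of tau of color [[d]] \ {i}; words act letter by letter,
   right-most first. *)
Definition act_letter (d : nat) (Gam : vtx d -> 'I_d.+1)
    (Om : seq (vtx d) -> nat -> seq ('I_d.+1 * nat) -> seq ('I_d.+1 * nat))
    (x : 'I_d.+1 * nat) (tau : seq ('I_d.+1 * nat)) : seq ('I_d.+1 * nat) :=
  Om [seq v <- cverts tau | Gam v != x.1] x.2 tau.

Definition act (d : nat) (Gam : vtx d -> 'I_d.+1)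
    (Om : seq (vtx d) -> nat -> seq ('I_d.+1 * nat) -> seq ('I_d.+1 * nat))
    (g : word d) (tau : seq ('I_d.+1 * nat)) : seq ('I_d.+1 * nat) :=
  foldr (act_letter Gam Om) tau g.

(* Main.v *)
Require Import Defs.
From HB Require Import structures.
From mathcomp Require Import all_boot.
Set Implicit Arguments. Unset Strict Implicit. Unset Printing Implicit Defensive.

Definition lpos d (prev : option 'I_d.+1) (s : seq ('I_d.+1 * nat)) :=
  if s is y :: s' then Some (last y s').1 else prev.

Lemma valid_cat d k (prev : option 'I_d.+1) s t :
  valid_from k prev (s ++ t) = valid_from k prev s && valid_from k (lpos prev s) t.
Proof.
elim: s prev => [|[i j] s IH] prev /=; first by [].
rewrite IH; case: s {IH} => [|y s] /=; first by rewrite andbT !andbA.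
by rewrite !andbA.
Qed.

Lemma valid_rcons d k (prev : option 'I_d.+1) s x :
  valid_from k prev (rcons s x) =
  valid_from k prev s && [&& lpos prev s != Some x.1, 0 < x.2 & x.2 < k].
Proof. by rewrite -cats1 valid_cat; case: x => i j /=; rewrite andbT. Qed.

Lemma vertex_nil d (i : 'I_d.+1) : vertex [::] i = inl i.
Proof. by []. Qed.

Lemma vertex_rcons_eq d (p : seq ('I_d.+1 * nat)) i j :
  vertex (rcons p (i, j)) i = inr (rcons p (i, j)).
Proof.
rewrite /vertex map_rcons rev_rcons /= eqxx size_rcons subn0 ltnS leq0n.
by rewrite take_oversize ?size_rcons.
Qed.

Lemma vertex_rcons_neq d (p : seq ('I_d.+1 * nat)) i j i' :
  i' != i -> vertex (rcons p (i, j)) i' = vertex p i'.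
Proof.
move=> ne; rewrite /vertex map_rcons rev_rcons /= eq_sym (negbTE ne).
rewrite size_rcons ltnS subSS; case: ifP => // _.
by rewrite -cats1 takel_cat // leq_subr.
Qed.

Lemma vertexP d (p : seq ('I_d.+1 * nat)) i :
 (vertex p i = inl i /\ i \notin map fst p) \/
 (exists n, [/\ vertex p i = inr (take n p), 0 < n <= size p,
     (last (ord0, 0) (take n p)).1 = i & i \notin map fst (drop n p)]).
Proof.
elim/last_ind: p => [|p [i0 j0] IH]; first by left.
case: (eqVneq i i0) => [->|ne].
  right; exists (size p).+1; rewrite vertex_rcons_eq take_oversize ?size_rcons //.
  by rewrite drop_oversize ?size_rcons // last_rcons ltnSn.
rewrite vertex_rcons_neq //; case: IH => [[-> nin]|[n [-> /andP[n0 np] l nin]]].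
  by left; split => //; rewrite map_rcons mem_rcons in_cons negb_or ne.
right; exists n; rewrite -cats1 takel_cat // n0 size_cat /= addn1 ltnW ?ltnS //.
split => //; rewrite drop_cat ltn_neqAle np andbT.
case: (eqVneq n (size p)) => [->|_]; last by rewrite map_cat mem_cat negb_or nin /= in_cons negb_or ne.
by rewrite subnn drop0 /= in_cons orbF.
Qed.

Lemma vertex_pos d (p q : seq ('I_d.+1 * nat)) i i' :
  vertex p i = vertex q i' -> i = i'.
Proof.
case: (vertexP p i) => [[-> _]|[n [-> _ l _]]];
case: (vertexP q i') => [[-> _]|[m [-> _ l' _]]] //.
- by case.
- by case=> e; rewrite -l -l' e.
Qed.

Definition pi d (Gam : vtx d -> 'I_d.+1) (i : 'I_d.+1) := Gam (inl i).
Definition Fc d (Gam : vtx d -> 'I_d.+1) (p : seq ('I_d.+1 * nat)) c :=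
  [seq v <- cverts p | Gam v != c].

Lemma cvertsP d (p : seq ('I_d.+1*nat)) v :
  reflect (exists i, v = vertex p i) (v \in cverts p).
Proof.
apply: (iffP mapP) => [[i _ ->]|[i ->]]; first by exists i.
by exists i; rewrite ?mem_enum.
Qed.

Lemma vertex_in d (p : seq ('I_d.+1*nat)) i : vertex p i \in cverts p.
Proof. by apply/cvertsP; exists i. Qed.

Lemma pi_inj d k (Gam : vtx d -> 'I_d.+1) : coloring k Gam -> injective (pi Gam).
Proof.
move=> C i i' e.
have := C [::] isT _ _ (vertex_in [::] i) (vertex_in [::] i') e.
exact: vertex_pos.
Qed.

Lemma pi_onto d k (Gam : vtx d -> 'I_d.+1) c : coloring k Gam -> exists i, pi Gam i = c.
Proof.
move=> C; have /codomP[i ->] := injF_onto (pi_inj C) c; by exists i.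
Qed.

Lemma color_vertex d k (Gam : vtx d -> 'I_d.+1) p i :
  coloring k Gam -> dcell k p -> Gam (vertex p i) = pi Gam i.
Proof.
move=> C; elim/last_ind: p i => [|p [i0 j0] IH] i; first by [].
rewrite /dcell valid_rcons => /andP[dp Hr].
case: (eqVneq i i0) => [->|ne]; last by rewrite vertex_rcons_neq // IH.
have [i1 e1] := pi_onto (Gam (vertex (rcons p (i0, j0)) i0)) C.
case: (eqVneq i1 i0) => [e|ne1]; first by rewrite -e1 e.
have dr : dcell k (rcons p (i0, j0)) by rewrite /dcell valid_rcons dp Hr.
have := C _ dr _ _ (vertex_in _ i0) (vertex_in _ i1).
rewrite (vertex_rcons_neq _ _ ne1) IH // -e1 => /(_ erefl) /vertex_pos e.
by rewrite e eqxx in ne1.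
Qed.

Lemma FcP d k (Gam : vtx d -> 'I_d.+1) p c v : coloring k Gam -> dcell k p ->
  (v \in Fc Gam p c) <-> exists2 i, v = vertex p i & pi Gam i != c.
Proof.
move=> C dp; rewrite mem_filter; split.
  by case/andP=> nc /cvertsP[i e]; exists i => //; rewrite -(color_vertex _ C dp) -e.
by case=> i -> nc; rewrite vertex_in (color_vertex _ C dp) nc.
Qed.

Lemma Fc_sub d (Gam : vtx d -> 'I_d.+1) p c : {subset Fc Gam p c <= cverts p}.
Proof. by move=> v; rewrite mem_filter => /andP[]. Qed.

Lemma vertex_inj d (p : seq ('I_d.+1*nat)) : injective (vertex p).
Proof. by move=> i i' /vertex_pos. Qed.

Lemma facet_Fc d k (Gam : vtx d -> 'I_d.+1) p c :
  1 <= d -> coloring k Gam -> dcell k p -> facet k (Fc Gam p c).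
Proof.
move=> Hd C dp; have [i0 e0] := pi_onto c C.
split; first split.
- pose i' : 'I_d.+1 := if i0 == ord0 then ord_max else ord0.
  have ne : i' != i0.
    rewrite /i'; case: (eqVneq i0 ord0) => [->|n]; last by rewrite eq_sym.
    by rewrite -(inj_eq val_inj) /= -lt0n.
  have : vertex p i' \in Fc Gam p c.
    by apply/(FcP _ _ C dp); exists i' => //; rewrite -e0 (inj_eq (pi_inj C)).
  by case: (Fc Gam p c).
- by exists p; split => //; exact: Fc_sub.
have u : uniq (Fc Gam p c).
  by apply: filter_uniq; rewrite map_inj_uniq ?enum_uniq //; exact: vertex_inj.
rewrite undup_id // size_filter count_map.
rewrite (eq_count (a2 := predC (fun i => i == i0))); last first.
  by move=> i /=; rewrite (color_vertex _ C dp) -e0 (inj_eq (pi_inj C)).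
have := count_predC (fun i => i == i0) (enum 'I_d.+1).
rewrite size_enum_ord (count_uniq_mem _ (enum_uniq _)) mem_enum /=.
by rewrite add1n => [[]].
Qed.

Lemma in_delta_self d k (Gam : vtx d -> 'I_d.+1) p c :
  dcell k p -> in_delta k (Fc Gam p c) p.
Proof. by move=> dp; split => //; exact: Fc_sub. Qed.

Lemma step_props d k (Gam : vtx d -> 'I_d.+1) Om p x :
  1 <= d -> coloring k Gam -> k_ordering k Om -> dcell k p ->
  dcell k (act_letter Gam Om x p) /\
  {subset Fc Gam p x.1 <= cverts (act_letter Gam Om x p)}.
Proof.
move=> Hd C KO dp; have [_ H2 _] := KO _ (facet_Fc x.1 Hd C dp).
have [H _ _ _] := H2 p (in_delta_self Gam _ dp).
exact: H.
Qed.

Lemma Fc_eq d k (Gam : vtx d -> 'I_d.+1) p q c :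
  coloring k Gam -> dcell k p -> dcell k q -> {subset Fc Gam p c <= cverts q} ->
  Fc Gam q c =i Fc Gam p c.
Proof.
move=> C dp dq s v; apply/idP/idP => vin.
  have [i -> nc] := (FcP _ _ C dq).1 vin.
  have vp : vertex p i \in Fc Gam p c by apply/(FcP _ _ C dp); exists i.
  have /cvertsP[i' e] := s _ vp.
  by move: (e); rewrite -(vertex_pos e) => <-.
by move: (vin); rewrite !mem_filter => /andP[-> _]; rewrite s.
Qed.

Lemma letter_merge d k (Gam : vtx d -> 'I_d.+1) Om p c a b :
  1 <= d -> coloring k Gam -> k_ordering k Om -> dcell k p ->
  act_letter Gam Om (c, a) (act_letter Gam Om (c, b) p) =
  act_letter Gam Om (c, a + b) p.
Proof.
move=> Hd C KO dp.
have [dq sq] := step_props (c, b) Hd C KO dp.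
have [H1 H2 _] := KO _ (facet_Fc c Hd C dp).
have [_ _ _ Hadd] := H2 p (in_delta_self Gam _ dp).
rewrite {1}/act_letter /=.
rewrite (H1 (Fc Gam (act_letter Gam Om (c, b) p) c) a _ (Fc_eq C dp dq sq)) //.
by rewrite /act_letter /= Hadd.
Qed.

Lemma act_cat d (Gam : vtx d -> 'I_d.+1) Om u v p :
  act Gam Om (u ++ v) p = act Gam Om u (act Gam Om v p).
Proof. by rewrite /act foldr_cat. Qed.

Lemma act_cons d (Gam : vtx d -> 'I_d.+1) Om x u p :
  act Gam Om (x :: u) p = act_letter Gam Om x (act Gam Om u p).
Proof. by []. Qed.

Lemma act_dcell d k (Gam : vtx d -> 'I_d.+1) Om g p :
  1 <= d -> coloring k Gam -> k_ordering k Om -> dcell k p -> dcell k (act Gam Om g p).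
Proof.
move=> Hd C KO dp; elim: g => [|x g IH] //.
by rewrite act_cons; case: (step_props x Hd C KO IH).
Qed.

Lemma act_weq d k (Gam : vtx d -> 'I_d.+1) Om g1 g2 :
  1 <= d -> coloring k Gam -> k_ordering k Om -> weq k g1 g2 ->
  forall p, dcell k p -> act Gam Om g1 p = act Gam Om g2 p.
Proof.
move=> Hd C KO; elim => {g1 g2}.
- by [].
- by move=> w1 w2 _ IH p dp; rewrite IH.
- by move=> w1 w2 w3 _ IH1 _ IH2 p dp; rewrite IH1 // IH2.
- move=> u1 u2 v1 v2 _ IHu _ IHv p dp.
  rewrite !act_cat IHv // IHu //; exact: act_dcell.
- by move=> i a b p dp; rewrite !act_cons /= (letter_merge _ _ _ Hd C KO dp).
- move=> i p dp; rewrite act_cons /= /act_letter /=.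
  have [_ H2 _] := KO _ (facet_Fc i Hd C dp).
  by have [_ -> _ _] := H2 p (in_delta_self Gam _ dp).
- move=> i p dp; rewrite act_cons /= /act_letter /=.
  have [_ H2 _] := KO _ (facet_Fc i Hd C dp).
  by have [_ _ -> _] := H2 p (in_delta_self Gam _ dp).
Qed.

Fixpoint red d k (w : word d) : bool :=
  if w is x :: w' then
    [&& 0 < x.2, x.2 < k, (if w' is y :: _ then x.1 != y.1 else true) & red k w']
  else true.

Lemma weq_mod d k (i : 'I_d.+1) l : weq k [:: (i, l)] [:: (i, l %% k)].
Proof.
rewrite {1}(divn_eq l k); elim: (l %/ k) => [|q IH].
  by rewrite mul0n add0n; constructor.
rewrite mulSn -addnA.
apply: weq_trans (weq_sym (weq_merge _ i k (q * k + l %% k))) _.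
exact: (weq_cat (weq_pow _ i) IH).
Qed.

Lemma reduce_ex d k (g : word d) : 0 < k -> exists2 w, weq k g w & red k w.
Proof.
move=> k0; elim: g => [|[i l] g [w gw rw]]; first by exists [::] => //; constructor.
have e1 : weq k ((i, l) :: g) ((i, l %% k) :: w) := weq_cat (weq_mod k i l) gw.
case: (posnP (l %% k)) => [l0|lp].
  exists w => //; apply: weq_trans e1 _; rewrite l0.
  exact: (weq_cat (weq_zero k i) (weq_refl k w)).
case: w gw rw e1 => [|[i' l'] w] gw rw e1.
  by exists [:: (i, l %% k)] => //=; rewrite lp ltn_pmod.
case: (eqVneq i i') => [ei|ne]; last first.
  by exists ((i, l %% k) :: (i', l') :: w) => //=; rewrite lp ltn_pmod // ne.
rewrite -ei in rw e1.
have e2 : weq k ((i, l %% k) :: (i, l') :: w) ((i, (l %% k + l') %% k) :: w) :=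
  weq_trans (weq_cat (weq_merge _ i _ _) (weq_refl k w))
            (weq_cat (weq_mod k i _) (weq_refl k w)).
move: rw => /= /and4P[_ _ hw rw].
case: (posnP ((l %% k + l') %% k)) => [m0|mp].
  exists w => //; apply: weq_trans (weq_trans e1 e2) _; rewrite m0.
  exact: (weq_cat (weq_zero k i) (weq_refl k w)).
exists ((i, (l %% k + l') %% k) :: w) => //; first exact: weq_trans e1 e2.
by rewrite /= mp ltn_pmod // hw rw.
Qed.

Lemma lcp_ex (T : eqType) (p q : seq T) : exists c p' q',
  [/\ p = c ++ p', q = c ++ q' &
      forall x y p'' q'', p' = x :: p'' -> q' = y :: q'' -> x != y].
Proof.
elim: p q => [|x p IH] q; first by exists [::], [::], q.
case: q => [|y q]; first by exists [::], (x :: p), [::].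
case: (eqVneq x y) => [<-|ne].
  have [c [p' [q' [-> -> H]]]] := IH q.
  by exists (x :: c), p', q'.
by exists [::], (x :: p), (y :: q); split => // x' y' p'' q'' [<- _] [<- _].
Qed.

Lemma take_eq_size T (s t : seq T) m n :
  m <= size s -> n <= size t -> take m s = take n t -> m = n.
Proof. by move=> ms nt /(congr1 size); rewrite !size_takel. Qed.

Lemma catL_inj T (a s t : seq T) : a ++ s = a ++ t -> s = t.
Proof. by elim: a => //= x a IH [] /IH. Qed.

Lemma drop_cat_le T (a u : seq T) n : n <= size a -> drop n (a ++ u) = drop n a ++ u.
Proof.
rewrite leq_eqVlt => /orP[/eqP ->|lt]; first by rewrite drop_size_cat // drop_size.
by rewrite drop_cat lt.
Qed.

Lemma take_cat_succ T (a u : seq T) : take (size a).+1 (a ++ u) = a ++ take 1 u.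
Proof. by rewrite take_cat ltnNge leqnSn /= subSnn. Qed.

Lemma nop d (p q c p' q' : seq ('I_d.+1 * nat)) i :
  p = c ++ p' -> q = c ++ q' ->
  (forall x y p'' q'', p' = x :: p'' -> q' = y :: q'' -> x != y) ->
  (forall i', i' != i -> vertex p i' = vertex q i') ->
  forall y, y \in p' -> y.1 = i.
Proof.
move=> ep eq hd H y yin; apply/eqP; apply/negP => /negP ne.
have yp : y.1 \in map fst p by rewrite ep map_cat mem_cat (map_f _ yin) orbT.
have Hv := H _ ne.
case: (vertexP p y.1) => [[_ /negP //]|[n [ev /andP[n0 np] _ nin]]].
have cn : size c < n.
  rewrite ltnNge; apply/negP => le; move: nin; rewrite ep drop_cat_le //.
  by rewrite map_cat mem_cat (map_f _ yin) orbT.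
move: Hv; rewrite ev.
case: (vertexP q y.1) => [[-> _] //|[m [-> /andP[m0 mq] _ _]]] [e].
have emn := take_eq_size np mq e; subst m.
have := congr1 (take (size c).+1) e; rewrite !take_takel // ep eq !take_cat_succ.
move=> /catL_inj.
case: p' ep hd yin => [//|x p''] ep hd _.
case: q' eq hd => [//|z q''] eq hd /= [ex].
by have := hd _ _ _ _ erefl erefl; rewrite ex eqxx.
Qed.

Lemma small_tail d k (c s : seq ('I_d.+1 * nat)) i :
  dcell k (c ++ s) -> (forall y, y \in s -> y.1 = i) ->
  s = [::] \/ exists j, s = [:: (i, j)].
Proof.
case: s => [|[i1 j1] [|[i2 j2] s]] dc H; first by left.
  by right; exists j1; have := H _ (mem_head _ _) => /= ->.
move: dc; rewrite /dcell valid_cat => /andP[_] /= /and4P[_ _ _] /and4P[/eqP ne _ _ _].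
have e1 : i1 = i := H _ (mem_head _ _); have e2 : i2 = i by apply: (H (i2, j2)); rewrite !in_cons eqxx orbT.
by case: ne; rewrite e1 e2.
Qed.

Lemma adj d k (p q : seq ('I_d.+1 * nat)) i :
  dcell k p -> dcell k q -> (forall i', i' != i -> vertex p i' = vertex q i') -> q != p ->
  [\/ exists j, q = rcons p (i, j), exists j, p = rcons q (i, j) |
      exists r j j', [/\ p = rcons r (i, j), q = rcons r (i, j') & j != j']].
Proof.
move=> dp dq H nqp.
have [c [p' [q' [ep eq hd]]]] := lcp_ex p q.
have hd' : forall x y p'' q'', q' = x :: p'' -> p' = y :: q'' -> x != y.
  by move=> x y p'' q'' e1 e2; rewrite eq_sym; apply: hd e2 e1.
have H' : forall i', i' != i -> vertex q i' = vertex p i' by move=> i' /H ->.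
have Np := nop ep eq hd H; have Nq := nop eq ep hd' H'.
have Sp : p' = [::] \/ exists j, p' = [:: (i, j)].
  by apply: (small_tail (c := c) (k := k)) => //; rewrite -ep.
have Sq : q' = [::] \/ exists j, q' = [:: (i, j)].
  by apply: (small_tail (c := c) (k := k)) => //; rewrite -eq.
case: Sp => [Pp|[j Pp]]; case: Sq => [Qq|[j' Qq]];
  subst p' q'.
- by rewrite ep eq eqxx in nqp.
- by constructor 1; exists j'; rewrite eq ep cats0 cats1.
- by constructor 2; exists j; rewrite ep eq cats0 cats1.
- constructor 3; exists c, j, j'; rewrite ep eq !cats1; split => //.
  by apply/negP => /eqP ejj; have := hd _ _ _ _ erefl erefl; rewrite ejj eqxx.
Qed.

Lemma lpos_rcons d (prev : option 'I_d.+1) s x : lpos prev (rcons s x) = Some x.1.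
Proof. by case: s => [|y s] //=; rewrite last_rcons. Qed.

Lemma base_ex d k (p : seq ('I_d.+1 * nat)) i : dcell k p -> exists r,
  [/\ dcell k r, lpos None r != Some i,
      (p = r \/ exists2 j0, 0 < j0 < k & p = rcons r (i, j0)) &
      forall i', i' != i -> vertex p i' = vertex r i'].
Proof.
move=> dp; case: (eqVneq (lpos None p) (Some i)) => [e|ne]; last first.
  by exists p; split => //; left.
case/lastP: p e dp => [//|r [i0 j0]]; rewrite lpos_rcons => -[ei]; subst i0.
rewrite /dcell valid_rcons => /andP[dr /and3P[ne j0p j0k]].
exists r; split => //; first by right; exists j0; rewrite ?j0p.
by move=> i' ne'; rewrite vertex_rcons_neq.
Qed.

Lemma nontriv d k (Gam : vtx d -> 'I_d.+1) Om p i l :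
  1 <= d -> coloring k Gam -> k_ordering k Om -> dcell k p -> 0 < l < k ->
  act_letter Gam Om (pi Gam i, l) p != p.
Proof.
move=> Hd C KO dp /andP[l0 lk].
set c := pi Gam i.
have [H1 H2 H3] := KO _ (facet_Fc c Hd C dp).
have [_ _ _ Hadd] := H2 p (in_delta_self Gam c dp).
rewrite /act_letter /=.
set sg := Fc Gam p c.
apply/negP => /eqP fx.
have per : forall m b, Om sg (b + m * l) p = Om sg b p.
  elim=> [|m IH] b; first by rewrite mul0n addn0.
  by rewrite mulSn addnCA addnC Hadd fx IH.
have img : forall a, Om sg a p \in [seq Om sg b p | b <- iota 0 l].
  move=> a; rewrite (divn_eq a l) addnC per.
  by apply: map_f; rewrite mem_iota add0n ltn_pmod.
have [r [dr nr hp hv]] := base_ex i dp.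
set L := r :: [seq rcons r (i, j) | j <- iota 1 k.-1].
have k0 : 0 < k by apply: leq_ltn_trans lk.
have Ldelta : forall q, q \in L -> in_delta k sg q.
  move=> q; rewrite in_cons => /orP[/eqP ->|/mapP[j jin ->]].
    split => // v /(FcP _ _ C dp)[i' -> ne'].
    have ii : i' != i by apply/eqP => e; move: ne'; rewrite e eqxx.
    rewrite hv //; exact: vertex_in.
  move: jin; rewrite mem_iota add1n prednK // => /andP[j1 jk].
  split; first by rewrite /dcell valid_rcons -/(dcell k r) dr nr /= j1 jk.
  move=> v /(FcP _ _ C dp)[i' -> ne'].
  have ii : i' != i by apply/eqP => e; move: ne'; rewrite e eqxx.
  rewrite hv // -(vertex_rcons_neq r j ii); exact: vertex_in.
have uL : uniq L.
  rewrite /= map_inj_uniq ?iota_uniq ?andbT.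
    apply/mapP => -[j _ e]; by have := congr1 size e; rewrite size_rcons => /n_Sn.
  by move=> j j' /(congr1 (last (ord0, 0))); rewrite !last_rcons => -[].
have sL : size L = k by rewrite /= size_map size_iota prednK.
have sub : {subset L <= [seq Om sg b p | b <- iota 0 l]}.
  move=> q qL; have [a <-] := H3 p q (in_delta_self Gam c dp) (Ldelta q qL).
  exact: img.
have := uniq_leq_size uL sub; rewrite sL size_map size_iota.
by rewrite leqNgt lk.
Qed.

Definition Inv d (Gam : vtx d -> 'I_d.+1) (p0 : seq ('I_d.+1 * nat)) (w : word d)
    (p : seq ('I_d.+1 * nat)) : Prop :=
  (exists u, [/\ p0 = p ++ u,
      (forall x, x \in w -> x.1 \in map (fun y => pi Gam y.1) u) &
      (match w with [::] => u = [::]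
         | x :: _ => exists y u', u = y :: u' /\ pi Gam y.1 = x.1 end)])
  \/ (exists a u w2, [/\ p0 = a ++ u, p = a ++ w2, take 1 u != take 1 w2,
      (forall x, x \in w -> x.1 \in map (fun y => pi Gam y.1) (u ++ w2)) &
      (match w with [::] => False
         | x :: _ => w2 != [::] /\ pi Gam (last (ord0, 0) w2).1 = x.1 end)]).

Lemma col_in d (Gam : vtx d -> 'I_d.+1) (s : seq ('I_d.+1 * nat)) i j c :
  (i, j) \in s -> pi Gam i = c -> c \in map (fun y => pi Gam y.1) s.
Proof. by move=> ins <-; apply/mapP; exists (i, j). Qed.

Lemma col_sub d (Gam : vtx d -> 'I_d.+1) (s t : seq ('I_d.+1 * nat)) c :
  {subset s <= t} -> c \in map (fun y => pi Gam y.1) s -> c \in map (fun y => pi Gam y.1) t.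
Proof. by move=> st /mapP[y ys ->]; apply/mapP; exists y => //; apply: st. Qed.

Lemma step_inv d k (Gam : vtx d -> 'I_d.+1) p0 (w : word d) p q x i :
  coloring k Gam -> Inv Gam p0 w p -> pi Gam i = x.1 ->
  (forall y w', w = y :: w' -> x.1 != y.1) ->
  [\/ exists j, q = rcons p (i, j), exists j, p = rcons q (i, j) |
      exists r j j', [/\ p = rcons r (i, j), q = rcons r (i, j') & j != j']] ->
  Inv Gam p0 (x :: w) q.
Proof.
move=> C [[u [e0 cu hu]]|[a [u [w2 [e0 ep tu cw hw]]]]] ex hx A.
  have hu' : forall y u', u = y :: u' -> pi Gam y.1 != x.1.
    move=> y u' eu; case: w hx hu cu => [_ e _|z w' hx [y' [u'' [e' ey]]] _].
      by rewrite e in eu.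
    rewrite eu in e'; case: e' => ey' _; rewrite ey' ey eq_sym; exact: hx _ _ erefl.
  case: A => [[j eq]|[j epq]|[r [j [j' [epr eqr njj]]]]].
  - right; exists p, u, [:: (i, j)]; split => //.
    + by rewrite eq cats1.
    + case: u hu' {e0 cu hu} => [//|y u'] hu' /=; apply/eqP => -[ey].
      by have := hu' y u' erefl; rewrite ey /= ex eqxx.
    + move=> z; rewrite in_cons => /orP[/eqP ->|zw].
        by apply: (col_in (j := j) _ ex); rewrite mem_cat mem_head orbT.
      by apply: col_sub (cu _ zw) => v vu; rewrite mem_cat vu.
  - left; exists ((i, j) :: u); split.
    + by rewrite e0 epq cat_rcons.
    + move=> z; rewrite in_cons => /orP[/eqP ->|zw].
        by apply: (col_in (j := j) _ ex); rewrite mem_head.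
      by apply: col_sub (cu _ zw) => v vu; rewrite in_cons vu orbT.
    + by exists (i, j), u.
  - right; exists r, ((i, j) :: u), [:: (i, j')]; split.
    + by rewrite e0 epr cat_rcons.
    + by rewrite eqr cats1.
    + by apply/eqP => -[e]; rewrite e eqxx in njj.
    + move=> z; rewrite in_cons => /orP[/eqP ->|zw].
        by apply: (col_in (j := j') _ ex); rewrite mem_cat mem_head orbT.
      by apply: col_sub (cu _ zw) => v vu; rewrite mem_cat in_cons vu orbT.
    + by [].
case: w hw hx cw => [//|z w'] [nw2 lw] hx cw.
have lastp : last (ord0, 0) p = last (ord0, 0) w2.
  by rewrite ep last_cat; case: (w2) nw2.
have lp : (last (ord0, 0) p).1 != i.
  apply/eqP => e; have := hx _ _ erefl; rewrite -lw -lastp e ex eqxx.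
  by [].
case: A => [[j eq]|[j epq]|[r [j [j' [epr eqr njj]]]]].
- right; exists a, u, (rcons w2 (i, j)); split => //.
  + by rewrite eq ep rcons_cat.
  + by case: (w2) nw2 tu => [|y w3] //=; rewrite !take0.
  + move=> y; rewrite in_cons => /orP[/eqP ->|yw].
      by apply: (col_in (j := j) _ ex); rewrite mem_cat mem_rcons mem_head orbT.
    by apply: col_sub (cw _ yw) => v; rewrite !mem_cat mem_rcons in_cons => /orP[->|->];
      rewrite ?orbT.
  + by split; [case: (w2) | rewrite last_rcons].
- by rewrite epq last_rcons eqxx in lp.
- by rewrite epr last_rcons eqxx in lp.
Qed.

Lemma inv_concl d k (Gam : vtx d -> 'I_d.+1) p0 (w : word d) p x i :
  coloring k Gam -> Inv Gam p0 w p -> x \in w -> pi Gam i = x.1 ->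
  vertex p0 i \notin cverts p.
Proof.
move=> C HI xw ex; apply/negP => /cvertsP[i' ev].
have ei := vertex_pos ev; subst i'.
have colfst : forall s : seq ('I_d.+1 * nat), x.1 \in map (fun y => pi Gam y.1) s -> i \in map fst s.
  move=> s /mapP[y ys e]; rewrite -ex in e.
  by rewrite (pi_inj C e) map_f.
case: HI => [[u [e0 cu _]]|[a [u [w2 [e0 ep tu cw _]]]]].
  have iu := colfst _ (cu _ xw).
  case: (vertexP p0 i) => [[e nin]|[n [e /andP[n0 np] _ nin]]].
    by move: nin; rewrite e0 map_cat mem_cat iu orbT.
  case: (leqP n (size p)) => [le|lt].
    by move: nin; rewrite e0 drop_cat_le // map_cat mem_cat iu orbT.
  move: ev; rewrite e.
  case: (vertexP p i) => [[-> _] //|[m [-> /andP[_ mp] _ _]]] [em].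
  have enm := take_eq_size np mp em.
  by rewrite enm ltnNge mp in lt.
have iuw := colfst _ (cw _ xw).
case: (vertexP p0 i) => [[e nin]|[n [e /andP[n0 np] _ nin]]].
  have iw : i \in map fst w2.
    move: iuw nin; rewrite e0 !map_cat !mem_cat => /orP[->|->]; by rewrite ?orbT.
  move: ev; rewrite e.
  case: (vertexP p i) => [[_ nin'] _|[m [-> _ _ _]] //].
  by move: nin'; rewrite ep map_cat mem_cat iw orbT.
case: (leqP n (size a)) => [le|lt].
  have iw : i \in map fst w2.
    move: iuw nin; rewrite e0 drop_cat_le // !map_cat !mem_cat => /orP[->|->];
      by rewrite ?orbT.
  move: ev; rewrite e.
  case: (vertexP p i) => [[-> _] //|[m [-> /andP[_ mp] _ nin']]] [em].
  have enm := take_eq_size np mp em; subst m.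
  by move: nin'; rewrite ep drop_cat_le // map_cat mem_cat iw orbT.
move: ev; rewrite e.
case: (vertexP p i) => [[-> _] //|[m [-> /andP[_ mp] _ _]]] [em].
have enm := take_eq_size np mp em; subst m.
have := congr1 (take (size a).+1) em; rewrite !take_takel // e0 ep !take_cat_succ.
by move=> /catL_inj e1; rewrite e1 eqxx in tu.
Qed.

Lemma inv_all d k (Gam : vtx d -> 'I_d.+1) Om tau (w : word d) :
  1 <= d -> coloring k Gam -> k_ordering k Om -> dcell k tau -> red k w ->
  Inv Gam tau w (act Gam Om w tau).
Proof.
move=> Hd C KO dt; elim: w => [|x w IH].
  by move=> _; left; exists [::]; rewrite cats0.
move=> rxw; have /and4P[x0 xk hx rw] := rxw; have HI := IH rw.
rewrite act_cons; set p := act Gam Om w tau.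
have dp : dcell k p by exact: act_dcell.
clear rxw; case: x x0 xk hx => c l /= x0 xk hx.
have [i ei] := pi_onto c C.
have nt := nontriv i Hd C KO dp (introT andP (conj x0 xk)).
rewrite ei in nt.
have [dq sq] := step_props (c, l) Hd C KO dp.
apply: (step_inv (x := (c, l)) (i := i) C HI ei).
  by move=> y w' ew; move: hx; rewrite ew.
apply: (adj (dp : dcell k p) dq _ nt) => i' ne.
have vp : vertex p i' \in Fc Gam p c.
  apply/(FcP _ _ C dp); exists i' => //; rewrite -ei (inj_eq (pi_inj C)) //.
have /cvertsP[i'' e] := sq _ vp.
by move: (e); rewrite -(vertex_pos e).
Qed.

Theorem lemma5 (d k : nat) (Hd : 1 <= d) (Hk : 1 <= k)
    (Gam : vtx d -> 'I_d.+1)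
    (Om : seq (vtx d) -> nat -> seq ('I_d.+1 * nat) -> seq ('I_d.+1 * nat)) :
  coloring k Gam -> k_ordering k Om ->
  forall tau : seq ('I_d.+1 * nat), dcell k tau ->
  forall rho : seq (vtx d), is_cell k rho -> {subset rho <= cverts tau} ->
  forall g : word d,
    {subset rho <= cverts (act Gam Om g tau)} <->
    inK k (fun j => j \notin map Gam rho) g.
Proof.
move=> C KO tau dt rho _ rt g; split.
  move=> H; have [w gw rw] := reduce_ex g Hk.
  exists w; split => //; apply/allP => x xw /=.
  apply/negP => /mapP[v vr ev].
  have /cvertsP[i ei] := rt _ vr.
  have HI := inv_all Hd C KO dt rw.
  have := inv_concl C HI xw (i := i).
  rewrite -(color_vertex i C dt) -ei -ev => /(_ erefl) /negP; apply.
  by rewrite -(act_weq Hd C KO gw dt); apply: H.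
case=> w [aw gw]; rewrite (act_weq Hd C KO gw dt).
elim: w aw {gw} => [|x w IH] //= /andP[xJ aw] v vr.
have vp := IH aw v vr.
have [_ sq] := step_props x Hd C KO (act_dcell w Hd C KO dt).
apply: sq; rewrite mem_filter vp andbT.
by apply: contraNneq xJ => <-; rewrite map_f.
Qed.
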